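(* Let $G_1$ be the planar symmetry group of a periodic isonemal prefabric, and suppose $G_1$ is of crystallographic type $pgg$ or $pmg$, with its reflection and glide-reflection axes at $45^\circ$ to the strand directions. Consider a rectangular lattice unit of $G_1$ whose corners are centres of half-turn symmetries; the nine points consisting of its four corners, the four midpoints of its sides, and its centre are all centres of half-turns (with or without side reversal). Then either all nine of these half-turn centres lie at cell corners or cell centres, or all nine lie on cell boundaries but not at cell corners.
   Context: A prefabric consists of two perpendicular layers of parallel strands of unit width: warps (vertical) and wefts (horizontal). The plane is divided into unit square cells, each cell being where one warp crosses one weft. Each cell is coloured dark if the warp is on top as seen from the front, and pale if the weft is on top. A symmetry is an isometry of the plane that maps strands to strands and preserves which strand lies on top at each crossing. Such an isometry may need to be combined with the reversal $\tau$ of the two sides of the prefabric; if so it is called side-reversing, and otherwise side-preserving. The prefabric is isonemal if its symmetry group acts transitively on the set of strands. $G_1$ denotes the group of planar isometries underlying the symmetries. A half-turn centre of such a symmetry necessarily lies at a cell corner, at a cell centre, or at the midpoint of a cell edge. *)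

(* Defs.v *)
From Stdlib Require Import ZArith.
Open Scope Z_scope.

(* We use DOUBLED integer coordinates on the plane: the cell (i,j) is the
   unit square whose centre has doubled coordinates (2i+1, 2j+1); cell
   corners are the points with both doubled coordinates even, cell centres
   have both odd, and midpoints of cell edges have exactly one odd.
   Warp i is the vertical strand through the cells (i,_) (column), weft j is
   the horizontal strand through the cells (_,j) (row). *)

(* A prefabric: fab i j = true iff cell (i,j) is dark (warp on top seen
   from the front), false iff pale (weft on top). *)
Definition prefabric := Z -> Z -> bool.

(* Isometries of the plane mapping strands to strands (i.e. the grid to
   itself): p |-> L p + t where L is one of the 8 signed permutation
   matrices and t is an integer translation (even in doubled coordinates). *)
Record giso := GI { sw : bool; nx : bool; ny : bool; tx : Z; ty : Z }.

Definition sgn (b : bool) (a : Z) : Z := if b then - a else a.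

Definition app (g : giso) (p : Z * Z) : Z * Z :=
  let ab := if sw g then (snd p, fst p) else p in
  (sgn (nx g) (fst ab) + tx g, sgn (ny g) (snd ab) + ty g).

Definition valid (g : giso) : Prop := Z.Even (tx g) /\ Z.Even (ty g).

(* (g, rev) is a symmetry of the prefabric: side-preserving if rev = false,
   side-reversing (combined with tau) if rev = true.  When g interchanges
   the strand directions (sw g = true) the strand on top at a cell becomes
   a strand of the other direction, so the colour is complemented; tau
   complements the colour as well. *)
Definition is_sym (fab : prefabric) (g : giso) (rev : bool) : Prop :=
  valid g /\
  forall i j i' j' : Z,
    app g (2 * i + 1, 2 * j + 1) = (2 * i' + 1, 2 * j' + 1) ->
    fab i' j' = xorb (fab i j) (xorb (sw g) rev).

Definition inG1 (fab : prefabric) (g : giso) : Prop :=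
  exists rev : bool, is_sym fab g rev.

Inductive strand := Warp (i : Z) | Weft (j : Z).

Definition strand_img (g : giso) (s : strand) : strand :=
  match s with
  | Warp i =>
      let c := 2 * i + 1 in
      if sw g then Weft ((sgn (ny g) c + ty g - 1) / 2)
      else Warp ((sgn (nx g) c + tx g - 1) / 2)
  | Weft j =>
      let c := 2 * j + 1 in
      if sw g then Warp ((sgn (nx g) c + tx g - 1) / 2)
      else Weft ((sgn (ny g) c + ty g - 1) / 2)
  end.

Definition isonemal (fab : prefabric) : Prop :=
  forall s s' : strand, exists g, inG1 fab g /\ strand_img g s = s'.

Definition is_translation (g : giso) : Prop :=
  sw g = false /\ nx g = false /\ ny g = false.

Definition periodic (fab : prefabric) : Prop :=
  exists g h : giso,
    is_translation g /\ is_translation h /\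
    is_sym fab g false /\ is_sym fab h false /\
    tx g * ty h - ty g * tx h <> 0.

Definition in_transl (fab : prefabric) (t : Z * Z) : Prop :=
  exists g, inG1 fab g /\ is_translation g /\ tx g = fst t /\ ty g = snd t.

Definition halfturn_centre (fab : prefabric) (c : Z * Z) : Prop :=
  exists g, inG1 fab g /\ sw g = false /\ nx g = true /\ ny g = true /\
            app g c = c.

(* The point group (linear parts of G_1) is {I, -I, S, -S} where
   S : (x,y) |-> (y,x) and -S : (x,y) |-> (-y,-x) are the reflections in
   the two diagonals: a point group D2 whose reflection directions are at
   45 degrees to the strands. *)
Definition diag_point_group (fab : prefabric) : Prop :=
  (forall g, inG1 fab g -> nx g = ny g) /\
  (forall s n : bool, exists g, inG1 fab g /\ sw g = s /\ nx g = n /\ ny g = n).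

(* G_1 contains a (genuine) reflection with linear part S (b = false) or
   -S (b = true), i.e. such an element with a fixed point. *)
Definition has_mirror (fab : prefabric) (b : bool) : Prop :=
  exists g, inG1 fab g /\ sw g = true /\ nx g = b /\ ny g = b /\
            exists p, app g p = p.

(* Among the wallpaper groups with point group D2 (pmm, pmg, pgg, cmm),
   pgg is the one with no reflections and pmg the one with reflections in
   exactly one of the two directions. *)
Definition type_pgg_45 (fab : prefabric) : Prop :=
  diag_point_group fab /\ ~ has_mirror fab false /\ ~ has_mirror fab true.

Definition type_pmg_45 (fab : prefabric) : Prop :=
  diag_point_group fab /\ (has_mirror fab false <-> ~ has_mirror fab true).

Definition rect_lattice_unit (fab : prefabric) (P u v : Z * Z) : Prop :=
  in_transl fab u /\ in_transl fab v /\
  fst u * fst v + snd u * snd v = 0 /\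
  (forall t, in_transl fab t ->
     exists m n : Z, fst t = m * fst u + n * fst v /\
                     snd t = m * snd u + n * snd v).

Definition half_pt (P u v : Z * Z) (a b : Z) : Z * Z :=
  (fst P + (a * fst u + b * fst v) / 2, snd P + (a * snd u + b * snd v) / 2).

Definition corner_or_centre (p : Z * Z) : Prop :=
  (Z.Even (fst p) /\ Z.Even (snd p)) \/ (Z.Odd (fst p) /\ Z.Odd (snd p)).

Definition boundary_not_corner (p : Z * Z) : Prop :=
  (Z.Even (fst p) \/ Z.Even (snd p)) /\ ~ (Z.Even (fst p) /\ Z.Even (snd p)).

(* Main.v *)
Require Import Defs.
From Stdlib Require Import ZArith Lia Bool Classical.
Open Scope Z_scope.

Ltac simp := unfold app, sgn in *; cbn [fst snd sw nx ny tx ty xorb] in *.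

Lemma odd_sgn b i a : exists k, sgn b (2*i+1) + 2*a = 2*k+1.
Proof. destruct b; unfold sgn; [exists (a - i - 1) | exists (i + a)]; lia. Qed.

Lemma app_odd h i j : valid h -> exists k1 k2, app h (2*i+1, 2*j+1) = (2*k1+1, 2*k2+1).
Proof.
  intros [[a Ha] [b Hb]]. unfold app. destruct (sw h); cbn [fst snd]; rewrite Ha, Hb.
  - destruct (odd_sgn (nx h) j a) as [k1 H1]; destruct (odd_sgn (ny h) i b) as [k2 H2].
    exists k1, k2. rewrite H1, H2. reflexivity.
  - destruct (odd_sgn (nx h) i a) as [k1 H1]; destruct (odd_sgn (ny h) j b) as [k2 H2].
    exists k1, k2. rewrite H1, H2. reflexivity.
Qed.

Lemma sym_comp fab g h k r1 r2 : is_sym fab g r1 -> is_sym fab h r2 -> valid k ->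
  sw k = xorb (sw g) (sw h) -> (forall p, app k p = app g (app h p)) ->
  is_sym fab k (xorb r1 r2).
Proof.
  intros [vg Hg] [vh Hh] vk Hsw Hk. split; [exact vk|].
  intros i j i' j' E. destruct (app_odd h i j vh) as [k1 [k2 E2]].
  rewrite Hk, E2 in E. specialize (Hg _ _ _ _ E). specialize (Hh _ _ _ _ E2).
  rewrite Hg, Hh, Hsw. destruct (fab i j), (sw g), (sw h), r1, r2; reflexivity.
Qed.

Lemma G1_comp fab g h k : inG1 fab g -> inG1 fab h -> valid k ->
  sw k = xorb (sw g) (sw h) -> (forall p, app k p = app g (app h p)) -> inG1 fab k.
Proof.
  intros [r1 H1] [r2 H2] vk Hs Hk. exists (xorb r1 r2). eapply sym_comp; eauto.
Qed.

Lemma G1_valid fab g : inG1 fab g -> valid g.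
Proof. intros [r [v _]]. exact v. Qed.

Definition tr x y := GI false false false x y.
Ltac simp ::= unfold tr, app, sgn in *; cbn [fst snd sw nx ny tx ty xorb] in *.

Lemma transl_iff fab x y : in_transl fab (x,y) <-> inG1 fab (tr x y).
Proof.
  split.
  - intros [g [Hg [[Hs [Hx Hy]] [E1 E2]]]]. destruct g; simp; subst. exact Hg.
  - intros H. exists (tr x y). repeat split; auto.
Qed.

Lemma even_add x y : Z.Even x -> Z.Even y -> Z.Even (x + y).
Proof. intros [a Ha] [b Hb]. exists (a+b). lia. Qed.
Lemma even_opp x : Z.Even x -> Z.Even (- x).
Proof. intros [a Ha]. exists (-a). lia. Qed.

Lemma T_add fab x y x' y' : in_transl fab (x,y) -> in_transl fab (x',y') ->
  in_transl fab (x+x', y+y').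
Proof.
  rewrite !transl_iff. intros H1 H2.
  destruct (G1_valid _ _ H1) as [v1 w1]; destruct (G1_valid _ _ H2) as [v2 w2].
  simp.
  apply (G1_comp fab _ _ _ H1 H2).
  - split; simp; apply even_add; auto.
  - reflexivity.
  - intros [p q]. unfold app; simp. f_equal; lia.
Qed.

Lemma T_neg fab x y : in_transl fab (x,y) -> in_transl fab (-x,-y).
Proof.
  rewrite !transl_iff. intros [r [[v1 v2] H]]. exists r. split.
  - split; simp; apply even_opp; auto.
  - intros i j i' j' E. unfold app in E; simp. pose proof (f_equal fst E) as E1; pose proof (f_equal snd E) as E2; cbn [fst snd] in E1, E2.
    assert (app (tr x y) (2*i'+1, 2*j'+1) = (2*i+1, 2*j+1)) as E'.
    { unfold app; simp. f_equal; lia. }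
    specialize (H _ _ _ _ E'). simp. rewrite H.
    destruct (fab i' j'), r; reflexivity.
Qed.

Lemma T_zero fab x y : in_transl fab (x,y) -> in_transl fab (0,0).
Proof.
  intros H. replace (0,0) with (x + -x, y + -y) by (f_equal; lia).
  apply T_add; auto. apply T_neg; auto.
Qed.

Lemma T_mul fab x y : in_transl fab (x,y) -> forall m, in_transl fab (m*x, m*y).
Proof.
  intros H m. induction m using Z.peano_ind.
  - rewrite !Z.mul_0_l. eapply T_zero; eauto.
  - replace (Z.succ m * x, Z.succ m * y) with (m*x + x, m*y + y) by (f_equal; lia).
    apply T_add; auto.
  - replace (Z.pred m * x, Z.pred m * y) with (m*x + -x, m*y + -y) by (f_equal; lia).
    apply T_add; auto. apply T_neg; auto.
Qed.

Lemma mirrorS fab g l1 l2 : inG1 fab g -> sw g = true -> nx g = false -> ny g = false ->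
  in_transl fab (l1,l2) -> tx g + l2 + (ty g + l1) = 0 -> has_mirror fab false.
Proof.
  intros Hg Hs Hx Hy Ht E. rewrite transl_iff in Ht.
  destruct (G1_valid _ _ Hg) as [v1 v2]. destruct (G1_valid _ _ Ht) as [w1 w2].
  simp.
  exists (GI true false false (tx g + l2) (ty g + l1)). split.
  - apply (G1_comp fab _ _ _ Hg Ht).
    + split; simp; apply even_add; auto.
    + simp. rewrite Hs. reflexivity.
    + intros [p q]. destruct g; simp; subst. unfold app; simp. f_equal; lia.
  - repeat split. exists (tx g + l2, 0). unfold app; simp. f_equal; lia.
Qed.

Lemma mirrorN fab g l1 l2 : inG1 fab g -> sw g = true -> nx g = true -> ny g = true ->
  in_transl fab (l1,l2) -> tx g - l2 = ty g - l1 -> has_mirror fab true.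
Proof.
  intros Hg Hs Hx Hy Ht E. rewrite transl_iff in Ht.
  destruct (G1_valid _ _ Hg) as [v1 v2]. destruct (G1_valid _ _ Ht) as [w1 w2].
  simp.
  exists (GI true true true (tx g - l2) (ty g - l1)). split.
  - apply (G1_comp fab _ _ _ Hg Ht).
    + split; simp; apply even_add; auto; apply even_opp; auto.
    + simp. rewrite Hs. reflexivity.
    + intros [p q]. destruct g; simp; subst. unfold app; simp. f_equal; lia.
  - repeat split. exists (tx g - l2, 0). unfold app; simp. f_equal; lia.
Qed.

Lemma squareS fab g : inG1 fab g -> sw g = true -> nx g = false -> ny g = false ->
  in_transl fab (tx g + ty g, tx g + ty g).
Proof.
  intros Hg Hs Hx Hy. rewrite transl_iff.
  destruct (G1_valid _ _ Hg) as [v1 v2].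
  apply (G1_comp fab _ _ _ Hg Hg).
  - split; simp; apply even_add; auto.
  - simp. rewrite Hs. reflexivity.
  - intros [p q]. destruct g; simp; subst. unfold app; simp. f_equal; lia.
Qed.

Lemma squareN fab g : inG1 fab g -> sw g = true -> nx g = true -> ny g = true ->
  in_transl fab (tx g - ty g, ty g - tx g).
Proof.
  intros Hg Hs Hx Hy. rewrite transl_iff.
  destruct (G1_valid _ _ Hg) as [v1 v2].
  apply (G1_comp fab _ _ _ Hg Hg).
  - split; simp; apply even_add; auto; apply even_opp; auto.
  - simp. rewrite Hs. reflexivity.
  - intros [p q]. destruct g; simp; subst. unfold app; simp. f_equal; lia.
Qed.

Lemma transl_even fab x y : in_transl fab (x,y) -> Z.Even x /\ Z.Even y.
Proof. rewrite transl_iff. intros H. destruct (G1_valid _ _ H); auto. Qed.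

Lemma parS fab : diag_point_group fab -> ~ has_mirror fab false ->
  forall x y, in_transl fab (x,y) -> (x + y) mod 4 = 0.
Proof.
  intros [_ Hd] Hm x y Ht.
  destruct (Hd true false) as [g [Hg [Hs [Hx Hy]]]].
  destruct (G1_valid _ _ Hg) as [[a Ha] [b Hb]].
  destruct (transl_even _ _ _ Ht) as [[c Hc] [d Hd']].
  destruct (Z.eq_dec ((x+y) mod 4) 0) as [e|ne]; auto. exfalso.
  assert (exists q, x + y = 4*q+2) as [q Hq].
  { exists ((x+y)/4). pose proof (Z.mod_pos_bound (x+y) 4 ltac:(lia)). pose proof (Z_div_mod_eq_full (x+y) 4). pose proof (Z.mod_pos_bound (x+y) 4 ltac:(lia)). pose proof (Z_div_mod_eq_full (x+y) 4). lia. }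
  pose proof (squareS _ _ Hg Hs Hx Hy) as Hw.
  pose proof (T_add _ _ _ _ _ (T_mul _ _ _ Ht (-(a+b))) (T_mul _ _ _ Hw q)) as Hl.
  apply Hm. eapply mirrorS; eauto.
  rewrite Ha, Hb. nia.
Qed.

Lemma parN fab : diag_point_group fab -> ~ has_mirror fab true ->
  forall x y, in_transl fab (x,y) -> (x + y) mod 4 = 0.
Proof.
  intros [_ Hd] Hm x y Ht.
  destruct (Hd true true) as [g [Hg [Hs [Hx Hy]]]].
  destruct (G1_valid _ _ Hg) as [[a Ha] [b Hb]].
  destruct (transl_even _ _ _ Ht) as [[c Hc] [d Hd']].
  destruct (Z.eq_dec ((x+y) mod 4) 0) as [e|ne]; auto. exfalso.
  assert (exists q, x - y = 4*q+2) as [q Hq].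
  { exists ((x-y)/4). pose proof (Z.mod_pos_bound (x-y) 4 ltac:(lia)). pose proof (Z_div_mod_eq_full (x-y) 4). pose proof (Z.mod_pos_bound (x+y) 4 ltac:(lia)). pose proof (Z_div_mod_eq_full (x+y) 4). lia. }
  pose proof (squareN _ _ Hg Hs Hx Hy) as Hw.
  pose proof (T_add _ _ _ _ _ (T_mul _ _ _ Ht (-(a-b))) (T_mul _ _ _ Hw q)) as Hl.
  apply Hm. eapply mirrorN; eauto.
  rewrite Ha, Hb. nia.
Qed.

Lemma par1 x y : Z.Even (x+y) -> corner_or_centre (x,y).
Proof.
  intros [m Hm]. unfold corner_or_centre; simp.
  destruct (Z.Even_or_Odd x) as [[a Ha]|[a Ha]]; [left|right]; split;
    try (exists a; lia).
  - exists (m - a); lia.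
  - exists (m - a - 1); lia.
Qed.

Lemma par2 x y : Z.Odd (x+y) -> boundary_not_corner (x,y).
Proof.
  intros [m Hm]. unfold boundary_not_corner; simp.
  destruct (Z.Even_or_Odd x) as [[a Ha]|[a Ha]].
  - split; [left; exists a; lia|]. intros [_ [b Hb]]. lia.
  - split; [right; exists (m - a); lia|]. intros [[b Hb] _]. lia.
Qed.

Theorem lemma1 (fab : prefabric) (P u v : Z * Z) :
  periodic fab ->
  isonemal fab ->
  (type_pgg_45 fab \/ type_pmg_45 fab) ->
  rect_lattice_unit fab P u v ->
  halfturn_centre fab P ->
  halfturn_centre fab (fst P + fst u, snd P + snd u) ->
  halfturn_centre fab (fst P + fst v, snd P + snd v) ->
  halfturn_centre fab (fst P + fst u + fst v, snd P + snd u + snd v) ->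
  (forall a b : Z, 0 <= a <= 2 -> 0 <= b <= 2 ->
     halfturn_centre fab (half_pt P u v a b)) /\
  ((forall a b : Z, 0 <= a <= 2 -> 0 <= b <= 2 ->
      corner_or_centre (half_pt P u v a b)) \/
   (forall a b : Z, 0 <= a <= 2 -> 0 <= b <= 2 ->
      boundary_not_corner (half_pt P u v a b))).
Proof.
  intros _ _ Htype [Hu [Hv _]] [g0 [Hg0 [Hs0 [Hx0 [Hy0 Hf0]]]]] _ _ _.
  destruct P as [p1 p2], u as [u1 u2], v as [v1 v2]. simp.
  destruct (transl_even _ _ _ Hu) as [[U1 HU1] [U2 HU2]].
  destruct (transl_even _ _ _ Hv) as [[V1 HV1] [V2 HV2]].
  assert (Hhalf : forall a b, half_pt (p1,p2) (u1,u2) (v1,v2) a b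
            = (p1 + (a*U1 + b*V1), p2 + (a*U2 + b*V2))).
  { intros a b. unfold half_pt; simp. subst.
    replace (a * (2 * U1) + b * (2 * V1)) with ((a*U1+b*V1)*2) by ring.
    replace (a * (2 * U2) + b * (2 * V2)) with ((a*U2+b*V2)*2) by ring.
    rewrite !Z.div_mul by lia. reflexivity. }
  split.
  - intros a b _ _. rewrite Hhalf.
    pose proof (T_add _ _ _ _ _ (T_mul _ _ _ Hu a) (T_mul _ _ _ Hv b)) as Hl.
    pose proof Hl as Hl'. rewrite transl_iff in Hl'.
    destruct (G1_valid _ _ Hg0) as [w1 w2]. destruct (G1_valid _ _ Hl') as [z1 z2].
    simp.
    exists (GI false true true (tx g0 + (a*u1+b*v1)) (ty g0 + (a*u2+b*v2))).
    split.
    + apply (G1_comp fab _ _ _ Hl' Hg0).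
      * split; simp; apply even_add; auto.
      * simp. rewrite Hs0. reflexivity.
      * intros [p q]. destruct g0; simp; subst. unfold app; simp. f_equal; lia.
    + repeat split. destruct g0; simp; subst. unfold app in *; simp.
      pose proof (f_equal fst Hf0) as E1; pose proof (f_equal snd Hf0) as E2; cbn [fst snd] in E1, E2. f_equal; lia.
  - assert (Hdm : diag_point_group fab /\ (~ has_mirror fab false \/ ~ has_mirror fab true)).
    { destruct Htype as [[D [N1 N2]]|[D I]]; split; auto.
      destruct (classic (has_mirror fab false)) as [A|A]; [right; apply I; exact A|left; exact A]. }
    destruct Hdm as [D [N|N]];
      [pose proof (parS _ D N _ _ Hu) as Pu; pose proof (parS _ D N _ _ Hv) as Pv
      |pose proof (parN _ D N _ _ Hu) as Pu; pose proof (parN _ D N _ _ Hv) as Pv];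
    (assert (exists m, U1 + U2 = 2*m) as [m Hm]
      by (exists ((U1+U2)/2); pose proof (Z.mod_pos_bound (u1+u2) 4 ltac:(lia));
          pose proof (Z_div_mod_eq_full (u1+u2) 4);
          pose proof (Z.mod_pos_bound (U1+U2) 2 ltac:(lia));
          pose proof (Z_div_mod_eq_full (U1+U2) 2); lia));
    (assert (exists n, V1 + V2 = 2*n) as [n Hn]
      by (exists ((V1+V2)/2); pose proof (Z.mod_pos_bound (v1+v2) 4 ltac:(lia));
          pose proof (Z_div_mod_eq_full (v1+v2) 4);
          pose proof (Z.mod_pos_bound (V1+V2) 2 ltac:(lia));
          pose proof (Z_div_mod_eq_full (V1+V2) 2); lia));
    (destruct (Z.Even_or_Odd (p1+p2)) as [[k Hk]|[k Hk]]; [left|right]; intros a b _ _;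
     rewrite Hhalf; [apply par1; exists (k + a*m + b*n) | apply par2; exists (k + a*m + b*n)];
     nia).
Qed.
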